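(* Let $k\ge 2$ and let $H$ be a hypergraph on vertex set $V$ with $R(H)=\{1,k\}$ whose $1$-edges are exactly all singletons $\{v\}$, $v\in V$, and let $H^k$ denote the $k$-uniform hypergraph of $k$-edges of $H$. Then \[\pi(H)=\begin{cases}1+\pi(H^k) & \text{if } \pi(H^k)\ge 1-\frac1k,\\[2pt] 1+\left(\frac{1}{k(1-\pi(H^k))}\right)^{1/(k-1)}\left(1-\frac1k\right) & \text{otherwise.}\end{cases}\]
   Context: A hypergraph $H=(V,E)$ has finite vertex set $V$ and edge set $E\subseteq 2^V$; $R(H)=\{|F|:F\in E\}$. $H_1\subseteq H_2$ means there is an injective $f\colon V(H_1)\to V(H_2)$ with $f(F)\in E(H_2)$ for all $F\in E(H_1)$. For $G$ on $n$ vertices, $h_n(G)=\sum_{F\in E(G)}1/\binom{n}{|F|}$; $\pi_n(H)=\max\{h_n(G): G\text{ on } n \text{ vertices}, R(G)\subseteq R(H), H\not\subseteq G\}$ and $\pi(H)=\lim_n\pi_n(H)$. For a $k$-uniform hypergraph this $\pi$ is the usual Turán density $\lim_n \mathrm{ex}(n,H^k)/\binom nk$. *)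

(* Defs.v *)
From HB Require Import structures.
From mathcomp Require Import all_boot all_order all_algebra.
From mathcomp Require Import all_classical all_reals all_analysis.
Set Implicit Arguments. Unset Strict Implicit. Unset Printing Implicit Defensive.
Import Order.TTheory GRing.Theory Num.Theory.
Local Open Scope ring_scope.

Definition in_sizes (V : finType) (E : {set {set V}}) (m : nat) : bool :=
  [exists F in E, #|F| == m].

Definition sizes_sub (V W : finType) (EG : {set {set W}}) (EH : {set {set V}}) : bool :=
  [forall F in EG, in_sizes EH #|F|].

Definition hg_sub (V W : finType) (EH : {set {set V}}) (EG : {set {set W}}) : bool :=
  [exists f : {ffun V -> W}, injectiveb f && [forall F in EH, (f @: F) \in EG]].

Definition hn (R : realType) (n : nat) (G : {set {set 'I_n}}) : R :=
  \sum_(F in G) ('C(n, #|F|)%:R)^-1.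

(* pi_n(H): max of h_n(G) over G on n vertices, R(G) \subseteq R(H), H not \subseteq G.
   (The max is over a finite nonempty family -- the empty graph qualifies when H has
   an edge -- of nonnegative reals, so taking max with 0 is harmless.) *)
Definition pin (R : realType) (V : finType) (E : {set {set V}}) (n : nat) : R :=
  \big[Num.max/0]_(G : {set {set 'I_n}} | sizes_sub G E && ~~ hg_sub E G) hn R G.

Definition kedges (V : finType) (E : {set {set V}}) (k : nat) : {set {set V}} :=
  [set F in E | #|F| == k].

Definition pi_formula (R : realType) (k : nat) (a : R) : R :=
  if 1 - (k%:R)^-1 <= a then 1 + a
  else 1 + ((k%:R * (1 - a))^-1) `^ ((k%:R - 1)^-1) * (1 - (k%:R)^-1).

(* Main.v *)
Require Import Defs.
From HB Require Import structures.
From mathcomp Require Import all_boot all_order all_algebra.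
From mathcomp Require Import all_classical all_reals all_analysis.
From mathcomp Require Import ring lra zify.
Import Order.TTheory GRing.Theory Num.Theory.
Import numFieldNormedType.Exports.
Local Open Scope ring_scope.
Set Implicit Arguments. Unset Strict Implicit. Unset Printing Implicit Defensive.

Lemma bmax_ge (R : realType) (I : eqType) (r : seq I) (P : pred I) (f : I -> R) j :
  j \in r -> P j -> f j <= \big[Num.max/0]_(i <- r | P i) f i.
Proof.
elim: r => [//|x r IH]; rewrite inE big_cons; case/orP => [/eqP->|jr] Pj.
  by rewrite Pj le_max lexx.
case: ifP => _; last exact: IH.
by rewrite le_max (IH jr Pj) orbT.
Qed.

Lemma bmax_le (R : realType) (I : Type) (r : seq I) (P : pred I) (f : I -> R) b :
  (forall i, P i -> f i <= b) -> 0 <= b -> \big[Num.max/0]_(i <- r | P i) f i <= b.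
Proof.
move=> H b0; apply: (big_ind (fun x => x <= b)) => // x y xb yb.
by rewrite ge_max xb yb.
Qed.

Lemma bmax_att (R : realType) (I : eqType) (r : seq I) (P : pred I) (f : I -> R) :
  (exists2 j, j \in r & P j) -> (forall j, P j -> 0 <= f j) ->
  exists j, P j /\ f j = \big[Num.max/0]_(i <- r | P i) f i.
Proof.
move=> [j jr Pj] f0.
have : (\big[Num.max/0]_(i <- r | P i) f i = 0) \/
        exists j, P j /\ f j = \big[Num.max/0]_(i <- r | P i) f i.
  apply: (big_ind (fun x => x = 0 \/ exists j, P j /\ f j = x)).
  - by left.
  - move=> x y Hx Hy; case: (leP x y) => _; [exact: Hy| exact: Hx].
  - by move=> i Pi; right; exists i.
case => // H0; exists j; split => //.
by apply/eqP; rewrite eq_le bmax_ge //= H0 f0.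
Qed.

Lemma hn_ge0 (R : realType) n (G : {set {set 'I_n}}) : 0 <= hn R G.
Proof. by apply: sumr_ge0 => F _; rewrite invr_ge0 ler0n. Qed.

Lemma hn_unif (R : realType) n m (G : {set {set 'I_n}}) :
  (forall F, F \in G -> #|F| = m) -> hn R G = #|G|%:R / ('C(n, m))%:R.
Proof.
move=> HG; rewrite /hn (eq_bigr (fun _ => ('C(n, m)%:R)^-1)); last first.
  by move=> F FG; rewrite HG.
by rewrite sumr_const mulr_natl.
Qed.

Definition feas (V : finType) (E : {set {set V}}) n (G : {set {set 'I_n}}) :=
  sizes_sub G E && ~~ hg_sub E G.

Lemma pin_ub (R : realType) (V : finType) (E : {set {set V}}) n (G : {set {set 'I_n}}) :
  feas E G -> hn R G <= pin R E n.
Proof. by move=> H; apply: bmax_ge => //; rewrite mem_index_enum. Qed.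

Lemma pin_le (R : realType) (V : finType) (E : {set {set V}}) n (b : R) :
  (forall G : {set {set 'I_n}}, feas E G -> hn R G <= b) -> 0 <= b -> pin R E n <= b.
Proof. by move=> H b0; apply: bmax_le. Qed.

Lemma pin_ge0 (R : realType) (V : finType) (E : {set {set V}}) n : 0 <= pin R E n.
Proof. apply: (big_ind (fun x => 0 <= x)) => // [x y x0 y0|G _]; [by rewrite le_max x0|exact: hn_ge0]. Qed.

Lemma pin_att (R : realType) (V : finType) (E : {set {set V}}) n :
  (exists G : {set {set 'I_n}}, feas E G) ->
  exists G : {set {set 'I_n}}, feas E G /\ hn R G = pin R E n.
Proof.
move=> [G HG]; apply: bmax_att; first by exists G; rewrite ?mem_index_enum.
by move=> *; exact: hn_ge0.
Qed.


Lemma im_pre (W T : finType) (e : W -> T) (F : {set T}) :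
  F \subset e @: [set: _]%SET -> e @: (e @^-1: F) = F.
Proof.
move=> Fs; apply/setP=> x; apply/imsetP/idP => [[y]|xF].
  by rewrite inE => yF ->.
have /imsetP[y _ exy] := fintype.subsetP Fs x xF.
by exists y; rewrite // inE -exy.
Qed.

Lemma res_card (W T : finType) (e : W -> T) (G : {set {set T}}) :
  injective e ->
  #|[set F : {set W} | e @: F \in G]| = #|[set F in G | F \subset e @: [set: _]%SET]|.
Proof.
move=> ie; rewrite -(card_imset _ (imset_inj ie)); apply: eq_card => F.
rewrite inE; apply/imsetP/andP => [[F']|[FG Fs]].
  by rewrite inE => H ->; split => //; apply: imsetS; exact: finset.subsetT.
by exists (e @^-1: F); rewrite ?inE im_pre.
Qed.

Lemma lift_im n (i : 'I_n.+1) : lift i @: [set: _]%SET = [set~ i].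
Proof.
apply/setP => j; rewrite !inE; apply/imsetP/idP => [[y _ ->]|]; last rewrite eq_sym => ji.
  by rewrite eq_sym neq_lift.
have [y -> _] := unlift_some ji; by exists y.
Qed.

Lemma sub_setC1 (T : finType) (F : {set T}) i : (F \subset [set~ i]) = (i \notin F).
Proof.
apply/fintype.subsetP/idP => [H|H j jF]; last by rewrite !inE; apply: contraNneq H => <-.
by apply/negP => /H; rewrite !inE eqxx.
Qed.

Lemma dcount n k (G : {set {set 'I_n.+1}}) :
  (forall F, F \in G -> #|F| = k) ->
  (\sum_(i < n.+1) #|[set F in G | i \notin F]| = #|G| * (n.+1 - k))%N.
Proof.
move=> Gk.
rewrite (eq_bigr (fun i => \sum_(F in G) (i \notin F : nat))%N); last first.
  move=> i _; rewrite -sum1_card big_mkcond [RHS]big_mkcond.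
  by apply: eq_bigr => F _; rewrite !inE; case: (F \in G); case: (i \in F).
rewrite exchange_big /=.
rewrite (eq_bigr (fun _ => n.+1 - k)%N); first by rewrite sum_nat_const.
move=> F FG.
have -> : (\sum_(i < n.+1) (i \notin F : nat))%N = #|~: F|.
  rewrite -sum1_card [RHS]big_mkcond; apply: eq_bigr => i _; rewrite !inE.
  by case: (i \in F).
have := cardsC F; rewrite Gk // card_ord => H.
apply/eqP; rewrite -(eqn_add2l k) subnKC; first by rewrite H.
by rewrite -H leq_addr.
Qed.

Definition Hyp (k : nat) (V : finType) (E : {set {set V}}) :=
  [/\ (2 <= k)%N, (forall m : nat, in_sizes E m <-> (m = 1%N \/ m = k)) &
  (forall F : {set V}, (F \in E /\ #|F| = 1%N) <-> exists v : V, F = [set v]%SET)].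

Lemma E_sz k V (E : {set {set V}}) F : Hyp k E -> F \in E -> #|F| = 1%N \/ #|F| = k.
Proof. by case=> _ hs _ FE; apply/hs; apply/existsP; exists F; rewrite FE eqxx. Qed.

Lemma E_sing k V (E : {set {set V}}) v : Hyp k E -> [set v] \in E.
Proof. by case=> _ _ h; have [] := proj2 (h [set v]) (ex_intro _ v erefl). Qed.

Lemma E_k k V (E : {set {set V}}) : Hyp k E -> exists2 F, F \in E & #|F| = k.
Proof.
case=> _ hs _; have /existsP[F /andP[FE /eqP Fk]] : in_sizes E k := proj2 (hs k) (or_intror erefl).
by exists F.
Qed.

Lemma E_1 k V (E : {set {set V}}) F : Hyp k E -> F \in E -> #|F| = 1%N -> exists v, F = [set v].
Proof. by case=> _ _ h FE F1; apply/h. Qed.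

Lemma insz_Hk k V (E : {set {set V}}) m : Hyp k E -> in_sizes (kedges E k) m = (m == k).
Proof.
move=> hy; apply/existsP/eqP => [[F /andP[]]|->]; first by rewrite inE => /andP[_ /eqP <-] /eqP.
by have [F FE Fk] := E_k hy; exists F; rewrite !inE FE Fk eqxx.
Qed.

Lemma feas_k k V (E : {set {set V}}) n (G : {set {set 'I_n}}) : Hyp k E ->
  feas (kedges E k) G <-> ((forall F, F \in G -> #|F| = k) /\ ~~ hg_sub (kedges E k) G).
Proof.
move=> hy; rewrite /feas /sizes_sub; split.
  case/andP => /forallP H ->; split => // F FG.
  by have := implyP (H F) FG; rewrite insz_Hk // => /eqP.
case=> H ->; rewrite andbT; apply/forallP => F; apply/implyP => FG.
by rewrite insz_Hk // H.
Qed.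

Lemma ksub_card n k (G : {set {set 'I_n}}) : (forall F, F \in G -> #|F| = k) ->
  (#|G| <= 'C(n, k))%N.
Proof.
move=> Gk; rewrite -[in X in 'C(X, _)](card_ord n) -card_draws.
by apply: subset_leq_card; apply/fintype.subsetP => F FG; rewrite inE Gk.
Qed.

Lemma pk_card (R : realType) k V (E : {set {set V}}) n (G : {set {set 'I_n}}) : Hyp k E ->
  feas (kedges E k) G -> #|G|%:R <= pin R (kedges E k) n * ('C(n, k))%:R.
Proof.
move=> hy fG; have [Gk _] := (feas_k _ hy).1 fG.
have := pin_ub R fG; rewrite (hn_unif _ Gk).
have := ksub_card Gk; case: (posnP 'C(n, k)) => [->|Cp].
  by rewrite leqn0 => /eqP -> _; rewrite mulr0.
by move=> _; rewrite ler_pdivrMr // ltr0n.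
Qed.

Lemma pk_01 (R : realType) k V (E : {set {set V}}) n : Hyp k E ->
  0 <= pin R (kedges E k) n <= 1.
Proof.
move=> hy; rewrite pin_ge0 /=; apply: pin_le => // G fG.
have [Gk _] := (feas_k _ hy).1 fG; rewrite (hn_unif _ Gk).
have := ksub_card Gk; case: (posnP 'C(n, k)) => [->|Cp].
  by rewrite leqn0 => /eqP ->; rewrite mul0r.
by move=> H; rewrite ler_pdivrMr ?ltr0n // mul1r ler_nat.
Qed.

Lemma pk_att (R : realType) k V (E : {set {set V}}) n : Hyp k E ->
  exists G : {set {set 'I_n}}, feas (kedges E k) G /\
    #|G|%:R = pin R (kedges E k) n * ('C(n, k))%:R.
Proof.
move=> hy; have [|G [fG hG]] := @pin_att R _ (kedges E k) n.
  exists finset.set0; apply/(feas_k _ hy); split; first by move=> F; rewrite inE.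
  apply/negP => /existsP[f /andP[_ /forallP H]].
  have [F FE Fk] := E_k hy.
  by have := implyP (H F); rewrite !inE FE Fk eqxx => /(_ isT).
exists G; split => //; have [Gk _] := (feas_k _ hy).1 fG.
move: hG; rewrite (hn_unif _ Gk) => <-.
have := ksub_card Gk; case: (posnP 'C(n, k)) => [->|Cp].
  by rewrite leqn0 => /eqP ->; rewrite !mulr0n ?mulr0 ?mul0r.
by move=> _; rewrite divfK // pnatr_eq0 -lt0n.
Qed.

Lemma pk_mono (R : realType) k V (E : {set {set V}}) n : Hyp k E -> (k <= n)%N ->
  pin R (kedges E k) n.+1 <= pin R (kedges E k) n.
Proof.
move=> hy kn; apply: pin_le; last exact: pin_ge0.
move=> G fG; have [Gk nhg] := (feas_k _ hy).1 fG.
rewrite (hn_unif _ Gk).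
set p := pin R (kedges E k) n.
have Gi (i : 'I_n.+1) : (#|[set F in G | i \notin F]|%:R : R) <= p * ('C(n, k))%:R.
  have -> : #|[set F in G | i \notin F]| = #|[set F : {set 'I_n} | lift i @: F \in G]|.
    rewrite res_card; last exact: lift_inj.
    by apply: eq_card => F; rewrite !inE lift_im sub_setC1.
  apply: pk_card => //; apply/(feas_k _ hy); split.
    by move=> F; rewrite inE => /Gk; rewrite card_imset //; exact: lift_inj.
  apply: contra nhg => /existsP [g /andP [/injectiveP gi /forallP gF]].
  apply/existsP; exists [ffun v => lift i (g v)]; apply/andP; split.
    by apply/injectiveP => x y; rewrite !ffunE => /lift_inj; exact: gi.
  apply/forallP => F; apply/implyP => FH; have := implyP (gF F) FH; rewrite inE.
  suff -> : [ffun v => lift i (g v)] @: F = lift i @: (g @: F) by [].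
  by rewrite -imset_comp; apply: eq_imset => v; rewrite ffunE.
have S : ((#|G| * (n.+1 - k))%:R : R) <= n.+1%:R * (p * ('C(n, k))%:R).
  rewrite -(dcount Gk) natr_sum.
  apply: le_trans (ler_sum _ (fun i _ => Gi i)) _.
  by rewrite sumr_const card_ord mulr_natl.
have bd := mul_bin_down n.+1 k; rewrite /= in bd.
have a0 : (0 : R) < (n.+1 - k)%:R by rewrite ltr0n subn_gt0 ltnS.
have C0 : (0 : R) < ('C(n.+1, k))%:R by rewrite ltr0n bin_gt0 leqW.
rewrite ler_pdivrMr // -(ler_pM2r a0).
have E1 : n.+1%:R * (p * ('C(n, k))%:R) = p * ('C(n.+1, k))%:R * (n.+1 - k)%:R.
  by rewrite mulrCA -natrM bd natrM mulrA mulrAC.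
by rewrite -E1 -natrM.
Qed.

Definition ones n := [set F : {set 'I_n} | #|F| == 1%N].
Definition ksets n k := [set F : {set 'I_n} | #|F| == k].
Definition ksub n k (S : {set 'I_n}) := [set F : {set 'I_n} | F \subset S & #|F| == k].

Lemma ks_count n k (S : {set 'I_n}) :
  (#|ksets n k :\: ksub k S| + 'C(#|S|, k) = 'C(n, k))%N.
Proof.
rewrite -cards_draws -[in RHS](card_ord n) -card_draws -/(ksub k S) -/(ksets n k).
rewrite -(cardsID (ksub k S) (ksets n k)) addnC.
have -> // : ksets n k :&: ksub k S = ksub k S.
by apply/finset.setIidPr/fintype.subsetP => F; rewrite !inE => /andP[_ ->].
Qed.

Lemma hn_split (R : realType) n k (G : {set {set 'I_n}}) : (1 < k)%N ->
  (forall F, F \in G -> #|F| = 1%N \/ #|F| = k) ->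
  hn R G = #|G :&: ones n|%:R / n%:R + #|G :\: ones n|%:R / ('C(n, k))%:R.
Proof.
move=> k1 HG; rewrite /hn (big_setID (ones n)) /=.
rewrite (eq_bigr (fun _ => (n%:R)^-1)); last first.
  by move=> F; rewrite inE => /andP[_]; rewrite inE => /eqP ->; rewrite bin1.
rewrite [X in _ + X](eq_bigr (fun _ => (('C(n, k))%:R)^-1)); last first.
  move=> F; rewrite inE => /andP[F1 FG]; rewrite inE in F1.
  by case: (HG F FG) F1 => -> //; rewrite eqxx.
by rewrite !sumr_const !mulr_natl.
Qed.

Lemma enum_im (T : finType) (S : {set T}) : (@enum_val T (mem S)) @: [set: _]%SET = S.
Proof.
apply/setP => x; apply/imsetP/idP => [[i _ ->]|xS]; first exact: enum_valP.
by exists (enum_rank_in xS x); rewrite ?inE // enum_rankK_in.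
Qed.

Lemma UB (R : realType) k V (E : {set {set V}}) n (G : {set {set 'I_n}}) :
  Hyp k E -> (k <= n)%N -> feas E G ->
  exists2 s, (s <= n)%N & hn R G <= 1 + s%:R / n%:R -
    ('C(s, k))%:R / ('C(n, k))%:R * (1 - pin R (kedges E k) s).
Proof.
move=> hy kn fG; have [k2 hs hsing] := hy.
have k1 : (k == 1%N) = false by rewrite gtn_eqF.
have := fG; rewrite /feas /sizes_sub => /andP[/forallP sz nhg].
have Gsz (F : {set 'I_n}) : F \in G -> #|F| = 1%N \/ #|F| = k.
  by move=> FG; apply/hs; exact: (implyP (sz F) FG).
set S := [set v | [set v] \in G].
exists #|S|; first by rewrite -[X in (_ <= X)%N](card_ord n) max_card.
rewrite (hn_split R k2 Gsz).
have -> : #|G :&: ones n| = #|S|.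
  have -> : G :&: ones n = (fun v => [set v]) @: S.
    apply/setP => F; rewrite !inE; apply/andP/imsetP => [[FG /cards1P[v Fv]]|[v]].
      by exists v; rewrite // inE -Fv.
    by rewrite inE => vS ->; rewrite cards1 eqxx vS.
  by rewrite card_imset //; exact: set1_inj.
set Gk := G :\: ones n.
set e := @enum_val _ (mem S).
have Hres : #|Gk :&: ksub k S| = #|[set F : {set 'I_#|S|} | e @: F \in Gk]|.
  rewrite res_card; last exact: enum_val_inj.
  rewrite enum_im; apply: eq_card => F; rewrite !inE.
  case FG: (F \in G); rewrite ?andbF //=.
  by case: (Gsz F FG) => ->; rewrite ?k1 ?eqxx ?andbT ?andbF.
have Hp : (#|[set F : {set 'I_#|S|} | e @: F \in Gk]|%:R : R) <=
    pin R (kedges E k) #|S| * ('C(#|S|, k))%:R.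
  apply: pk_card => //; apply/(feas_k _ hy); split.
    move=> F; rewrite !inE => /andP[Fn1 FG].
    rewrite -(card_imset _ (@enum_val_inj _ (mem S))).
    by case: (Gsz _ FG) Fn1 => -> //; rewrite eqxx.
  apply: contra nhg => /existsP[g /andP[/injectiveP gi /forallP gF]].
  apply/existsP; exists [ffun v => e (g v)]; apply/andP; split.
    by apply/injectiveP => x y; rewrite !ffunE => /enum_val_inj; exact: gi.
  apply/forallP => F; apply/implyP => FE; case: (E_sz hy FE) => Fsz.
    have [v ->] := E_1 hy FE Fsz; rewrite imset_set1 ffunE.
    by have := enum_valP (g v); rewrite inE.
  have FH : F \in kedges E k by rewrite inE FE Fsz eqxx.
  have := implyP (gF F) FH; rewrite !inE => /andP[_ H].
  suff -> : [ffun v => e (g v)] @: F = e @: (g @: F) by [].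
  by rewrite -imset_comp; apply: eq_imset => v; rewrite ffunE.
have HD : (#|Gk :\: ksub k S| <= #|ksets n k :\: ksub k S|)%N.
  apply: subset_leq_card; apply: finset.setSD; apply/fintype.subsetP => F.
  rewrite !inE => /andP[Fn1 FG]; by case: (Gsz _ FG) Fn1 => ->; rewrite ?eqxx.
have HC := ks_count k S.
have HG := cardsID (ksub k S) Gk.
set A := #|Gk :&: ksub k S| in HG Hres.
set B := #|Gk :\: ksub k S| in HG HD.
set D := #|ksets n k :\: ksub k S| in HD HC.
rewrite -Hres in Hp; rewrite -HG.
have Cn0 : (0 : R) < ('C(n, k))%:R by rewrite ltr0n bin_gt0.
have HD' : (B%:R : R) <= D%:R by rewrite ler_nat.
have HC' : (D%:R : R) + ('C(#|S|, k))%:R = ('C(n, k))%:R by rewrite -natrD HC.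
set p := pin R (kedges E k) #|S| in Hp *.
set x := #|S|%:R / n%:R.
have -> : 1 + x - ('C(#|S|, k))%:R / ('C(n, k))%:R * (1 - p) =
    x + (('C(n, k))%:R - ('C(#|S|, k))%:R * (1 - p)) / ('C(n, k))%:R.
  by field; rewrite gt_eqF.
rewrite lerD2l ler_pM2r ?invr_gt0 // natrD; lra.
Qed.

Lemma LB (R : realType) k V (E : {set {set V}}) n s :
  Hyp k E -> (k <= n)%N -> (s <= n)%N ->
  exists G : {set {set 'I_n}}, feas E G /\ hn R G = 1 + s%:R / n%:R -
    ('C(s, k))%:R / ('C(n, k))%:R * (1 - pin R (kedges E k) s).
Proof.
move=> hy kn sn; have [k2 hs hsing] := hy.
have k1 : (k == 1%N) = false by rewrite gtn_eqF.
set e := widen_ord sn.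
have ei : injective e by move=> x y /(congr1 val) /= /val_inj.
set S := e @: [set: 'I_s]%SET.
have cS : #|S| = s by rewrite card_imset // cardsT card_ord.
have [Gs [fGs hGs]] := pk_att R s hy.
have [Gsk nhgs] := (feas_k _ hy).1 fGs.
set G1 := (fun v => [set v]) @: S.
set G2 := ksets n k :\: ksub k S.
set G3 := (fun F : {set 'I_s} => e @: F) @: Gs.
have G1s (F : {set 'I_n}) : F \in G1 -> #|F| = 1%N by case/imsetP => v _ ->; rewrite cards1.
have G2s (F : {set 'I_n}) : F \in G2 -> #|F| = k by rewrite !inE => /andP[_ /eqP].
have G3s (F : {set 'I_n}) : F \in G3 -> F \in ksub k S.
  case/imsetP => F' F'G ->; rewrite inE card_imset // Gsk // eqxx andbT.
  by apply: imsetS; exact: finset.subsetT.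
have G3s' (F : {set 'I_n}) : F \in G3 -> #|F| = k by move/G3s; rewrite inE => /andP[_ /eqP].
have Gsz (F : {set 'I_n}) : F \in G1 :|: G2 :|: G3 -> #|F| = 1%N \/ #|F| = k.
  by case/setUP => [/setUP[/G1s|/G2s]|/G3s']; auto.
have G23 : #|G2 :&: G3| = 0%N.
  apply/eqP; rewrite cards_eq0; apply/eqP/setP => F.
  apply/setIP/idP => [[F2 F3]|]; last by rewrite inE.
  by move: F2; rewrite /G2 inE (G3s F F3).
have E1 : (G1 :|: G2 :|: G3) :&: ones n = G1.
  apply/setP => F; apply/setIP/idP => [[FG F1]|FG1].
    rewrite inE in F1; case/setUP: FG => [/setUP[//|/G2s Fk]|/G3s' Fk].
      by rewrite Fk k1 in F1.
    by rewrite Fk k1 in F1.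
  by split; [rewrite !inE FG1 | rewrite inE G1s].
have E2 : (G1 :|: G2 :|: G3) :\: ones n = G2 :|: G3.
  apply/setP => F; apply/setDP/idP => [[FG F1]|FG23].
    case/setUP: FG => [/setUP[/G1s F1'|F2]|F3]; last by rewrite inE F3 orbT.
      by rewrite inE F1' in F1.
    by rewrite inE F2.
  split; first by case/setUP: FG23 => H; apply/setUP; [left; apply/setUP; right|right].
  by rewrite inE; case/setUP: FG23 => [/G2s|/G3s'] ->; rewrite k1.
exists (G1 :|: G2 :|: G3); split.
  rewrite /feas; apply/andP; split.
    by apply/forallP => F; apply/implyP => FG; apply/hs; exact: Gsz.
  apply/negP => /existsP[f /andP[/injectiveP fi /forallP fF]].
  have fS v : f v \in S.
    have := implyP (fF [set v]) (E_sing v hy); rewrite imset_set1.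
    case/setUP => [/setUP[/imsetP[w wS /set1_inj ->] //|/G2s]|/G3s'];
      by rewrite cards1 => /eqP; rewrite eq_sym k1.
  have [F0 F0E F0k] := E_k hy.
  have /set0Pn[v0 _] : F0 != finset.set0 by rewrite -card_gt0 F0k (ltnW k2).
  have /imsetP[j0 _ _] := fS v0.
  pose g := [ffun v => odflt j0 [pick j | e j == f v]].
  have egv v : e (g v) = f v.
    rewrite ffunE; case: pickP => [j /eqP //|H].
    by have /imsetP[j _ ej] := fS v; have := H j; rewrite ej eqxx.
  move/negP: nhgs; apply; apply/existsP; exists g; apply/andP; split.
    by apply/injectiveP => x y gxy; apply: fi; rewrite -!egv gxy.
  apply/forallP => F; apply/implyP; rewrite inE => /andP[FE /eqP Fk].
  have fFG := implyP (fF F) FE.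
  have fF' : f @: F = e @: (g @: F).
    by rewrite -imset_comp; apply: eq_imset => v; rewrite /= egv.
  have fk : #|f @: F| = k by rewrite card_imset.
  have fsub : f @: F \subset S.
    by apply/fintype.subsetP => x /imsetP[v _ ->]; exact: fS.
  case/setUP: fFG => [/setUP[/G1s|]|].
      by rewrite fk => /eqP; rewrite k1.
    by rewrite /G2 !inE fsub fk eqxx.
  by case/imsetP => F' F'G; rewrite fF' => /(imset_inj ei) ->.
rewrite (hn_split R k2 Gsz) E1 E2 cardsU G23 subn0.
have -> : #|G1| = s by rewrite card_imset ?cS //; exact: set1_inj.
have -> : #|G3| = #|Gs| by rewrite card_imset //; exact: imset_inj.
have HC := ks_count k S; rewrite cS in HC.
have Cn0 : (0 : R) < ('C(n, k))%:R by rewrite ltr0n bin_gt0.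
have HC' : (#|G2|%:R : R) = ('C(n, k))%:R - ('C(s, k))%:R.
  by rewrite -HC natrD addrK.
rewrite natrD HC' hGs.
by field; rewrite gt_eqF //= pnatr_eq0 -lt0n (leq_trans _ kn) // ltnW.
Qed.

Lemma tangent (R : realType) (y z : R) m : 0 <= y -> 0 <= z ->
  z ^+ m.+1 + m.+1%:R * z ^+ m * (y - z) <= y ^+ m.+1.
Proof.
move=> y0 z0; elim: m => [|m IH]; first by rewrite !expr1 expr0 mulr1 mul1r; lra.
have w0 : 0 <= z ^+ m by rewrite exprn_ge0.
have H1 := ler_wpM2l y0 IH.
have s0 : 0 <= (y - z) * (y - z) by rewrite -expr2 sqr_ge0.
have H2 := mulr_ge0 (mulr_ge0 (ler0n R m.+1) w0) s0.
rewrite exprS [y ^+ _]exprS; apply: le_trans H1.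
rewrite !exprS -[m.+2%:R]natr1 -[m.+1%:R]natr1 in H2 *.
set w := z ^+ m in w0 H2 *; set M := m%:R in H2 *.
have M0 : 0 <= M by rewrite ler0n.
nra.
Qed.


Lemma pi_formulaE (R : realType) k (a : R) : pi_formula k a =
  if 1 - (k%:R)^-1 <= a then 1 + a
  else 1 + ((k%:R * (1 - a))^-1) `^ ((k%:R - 1)^-1) * (1 - (k%:R)^-1).
Proof. by []. Qed.

Lemma phi_all (R : realType) k (a : R) : (2 <= k)%N -> 0 <= a <= 1 ->
  (forall y, 0 <= y <= 1 -> 1 + y - (1 - a) * y ^+ k <= pi_formula k a) /\
  (exists2 y0, 0 <= y0 <= 1 & 1 + y0 - (1 - a) * y0 ^+ k = pi_formula k a).
Proof.
case: k => [//|m] k2 /andP[a0 a1]; have m0 : (0 < m)%N by [].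
set kR : R := m.+1%:R.
have kR0 : 0 < kR by rewrite ltr0n.
rewrite pi_formulaE -/kR; case: ifP => hA0.
  have hA : 1 - kR^-1 <= a by exact: hA0.
  clear hA0.
  have hk : kR * (1 - a) <= 1.
    have : 1 - a <= kR^-1 by move: hA; generalize (kR^-1) => t; lra.
    by move/(ler_wpM2l (ltW kR0)); rewrite mulfV ?gt_eqF.
  split; last by exists 1; rewrite ?ler01 ?lexx // expr1n; lra.
  move=> y /andP[y0 y1].
  have T := tangent m y0 ler01; rewrite !expr1n mulr1 -/kR in T.
  set Y := y ^+ m.+1 in T *.
  have h1 : 0 <= 1 - a by rewrite subr_ge0.
  have h2 : 0 <= Y - (1 + kR * (y - 1)) by rewrite subr_ge0.
  have h3 : 0 <= 1 - kR * (1 - a) by rewrite subr_ge0.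
  have h4 : 0 <= 1 - y by rewrite subr_ge0.
  have P1 := mulr_ge0 h1 h2.
  have P2 := mulr_ge0 h3 h4.
  nra.
have hB : kR^-1 < 1 - a.
  have hA : ~~ (1 - kR^-1 <= a) by rewrite hA0.
  by move: hA; rewrite -ltNge; generalize (kR^-1) => t hA; lra.
have hk : 1 < kR * (1 - a).
  have kk : kR * kR^-1 = 1 by rewrite mulfV // gt_eqF.
  by have := ltr_pM2l kR0 (kR^-1) (1 - a); rewrite kk hB.
set c := (kR * (1 - a))^-1.
have c0 : 0 < c by rewrite invr_gt0 (lt_trans ltr01).
have c1 : c < 1 by rewrite invf_lt1 // (lt_trans ltr01).
have kRm : kR - 1 = m%:R by rewrite /kR -natr1 addrK.
set ys := c `^ (kR - 1)^-1.
have ys0 : 0 <= ys by exact: powR_ge0.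
have ysm : ys ^+ m = c.
  rewrite -powR_mulrn // /ys -powRrM kRm mulVf ?powRr1 ?ltW //.
  by rewrite pnatr_eq0 -lt0n.
have ys1 : ys <= 1.
  rewrite leNgt; apply/negP => h.
  by have := expr_gt1 m0 ys0; rewrite ysm h => /idP; rewrite ltNge (ltW c1).
have f1 : (1 - a) * c = kR^-1.
  have a1s : 0 < 1 - a by rewrite -(pmulr_rgt0 _ kR0) (lt_trans ltr01 hk).
  by rewrite /c invfM mulrCA mulfV ?mulr1 // gt_eqF.
have L : 1 + ys - (1 - a) * ys ^+ m.+1 = 1 + ys * (1 - kR^-1).
  by rewrite exprS ysm mulrCA f1; ring.
split; last by exists ys; rewrite ?ys0 ?ys1.
move=> y /andP[y0 y1].
have T := tangent m y0 ys0; rewrite -/kR ysm exprS ysm in T.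
have h1 : 0 <= 1 - a by rewrite subr_ge0.
have T2 := ler_wpM2l h1 T.
have E : (1 - a) * (ys * c + kR * c * (y - ys)) =
  ys * ((1 - a) * c) + kR * ((1 - a) * c) * (y - ys) by ring.
rewrite E f1 mulfV ?gt_eqF // mul1r in T2.
move: T2; generalize (kR^-1) => t T2; lra.
Qed.

Lemma bin_ratio (R : realType) n s k : (s <= n)%N -> (k <= n)%N ->
  ('C(s, k))%:R / ('C(n, k))%:R =
  \prod_(i < k) (((s - i)%N)%:R / ((n - i)%N)%:R : R).
Proof.
move=> sn kn; rewrite prodf_div -!natr_prod -!ffact_prod -!bin_ffact !natrM.
have f0 : (k`!)%:R != 0 :> R by rewrite pnatr_eq0 -lt0n fact_gt0.
by rewrite invfM mulrACA mulfV // mulr1.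
Qed.

Lemma bin_bounds (R : realType) n s k : (s <= n)%N -> (k <= n)%N -> (0 < n)%N ->
  [/\ 0 <= ('C(s, k))%:R / ('C(n, k))%:R :> R,
      ('C(s, k))%:R / ('C(n, k))%:R <= 1 :> R,
      ('C(s, k))%:R / ('C(n, k))%:R <= (s%:R / n%:R) ^+ k :> R &
      (k <= s)%N -> (((s - k)%N)%:R / n%:R) ^+ k <= ('C(s, k))%:R / ('C(n, k))%:R :> R].
Proof.
move=> sn kn n0.
have Cn : (0 : R) < ('C(n, k))%:R by rewrite ltr0n bin_gt0.
have nR : (0 : R) < n%:R by rewrite ltr0n.
split.
- by rewrite divr_ge0.
- by rewrite ler_pdivrMr // mul1r ler_nat leq_bin2l.
- rewrite bin_ratio // -[k in _ ^+ k](card_ord k) -prodr_const.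
  apply: ler_prod => i _; rewrite divr_ge0 //=.
  have ni : (0 : R) < ((n - i)%N)%:R by rewrite ltr0n subn_gt0 (leq_trans _ kn).
  rewrite ler_pdivrMr // mulrAC ler_pdivlMr // -!natrM ler_nat.
  rewrite mulnBr mulnBl mulnC leq_sub2l // mulnC leq_mul2l sn orbT //.
- move=> ks; rewrite bin_ratio // -[k in _ ^+ k](card_ord k) -prodr_const.
  apply: ler_prod => i _; rewrite divr_ge0 //=.
  have ni : (0 : R) < ((n - i)%N)%:R by rewrite ltr0n subn_gt0 (leq_trans _ kn).
  rewrite ler_pdivrMr // mulrAC ler_pdivlMr // -!natrM ler_nat.
  by apply: leq_mul; [apply: leq_sub2l; apply: ltnW | apply: leq_subr].
Qed.


Lemma arith_up (R : realType) (x yk y Y c ps a eps L Mn : R) :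
  x = y + yk -> yk <= Mn -> Mn <= eps / 2 -> Y <= c -> c <= 1 -> 0 <= c ->
  ps - a <= eps / 2 -> 0 <= 1 - a -> 1 + y - (1 - a) * Y <= L -> 0 < eps ->
  1 + x - c * (1 - ps) <= L + eps.
Proof.
move=> -> h1 h2 h3 h4 h5 h6 h7 h8 e0.
have P1 : 0 <= (c - Y) * (1 - a) by rewrite mulr_ge0 // subr_ge0.
have P2 : 0 <= c * (eps / 2 - (ps - a)) by rewrite mulr_ge0 // subr_ge0.
have P3 : 0 <= (1 - c) * (eps / 2) by rewrite mulr_ge0 ?subr_ge0 // divr_ge0 // ltW.

nra.
Qed.

Lemma arith_small (R : realType) (x z Mn eps L : R) :
  0 <= z -> x <= Mn -> Mn <= eps / 2 -> 1 <= L -> 0 < eps -> 1 + x - z <= L + eps.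
Proof. by move=> *; lra. Qed.

Lemma arith_U (R : realType) (t L eps : R) : t <= L + eps -> - eps <= L - t.
Proof. by move=> *; lra. Qed.

Lemma arith_Lo (R : realType) (t L eps : R) : L - eps <= t -> L - t <= eps.
Proof. by move=> *; lra. Qed.

Lemma arith_abs (R : realType) (t a e : R) : `|a - t| <= e -> t - a <= e /\ a - t <= e.
Proof. by rewrite ler_norml => /andP[h1 h2]; split; lra. Qed.

Lemma arith_low (R : realType) (x y0 c ps a eps L Mn X Y0 ni : R) :
  c * (1 - ps) <= X * (1 - a) -> X <= Y0 -> 0 <= 1 - a ->
  1 + y0 - (1 - a) * Y0 = L -> y0 < x + ni -> ni <= Mn -> Mn <= eps / 2 -> 0 < eps ->
  L - eps <= 1 + x - c * (1 - ps).
Proof.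
move=> h1 h2 h3 h4 h5 h6 h7 e0.
have P1 : 0 <= (Y0 - X) * (1 - a) by rewrite mulr_ge0 // subr_ge0.

nra.
Qed.


Unset Implicit Arguments.
Local Open Scope classical_set_scope.
Local Open Scope ring_scope.

Theorem mainTheorem6 (R : realType) (k : nat) (V : finType) (E : {set {set V}}) :
  (2 <= k)%N ->
  (forall m : nat, in_sizes E m <-> (m = 1%N \/ m = k)) ->
  (forall F : {set V}, (F \in E /\ #|F| = 1%N) <-> exists v : V, F = [set v]%SET) ->
  exists a : R,
    (pin R (kedges E k) n @[n --> \oo] --> a) /\
    (pin R E n @[n --> \oo] --> pi_formula k a).
Proof.
move=> k2 hsz hsing.
have hy : Hyp k E by split.
pose p := fun n => pin R (kedges E k) n.
pose q := fun n => p (n + k)%N.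
have qmono : {homo q : n m / (n <= m)%N >-> m <= n}.
  move=> n m nm; rewrite -(subnKC nm); elim: (m - n)%N => [|d IH]; first by rewrite addn0.
  apply: le_trans IH; rewrite /q /p addnS addSn.
  by apply: pk_mono => //; rewrite leq_addl.
have qlb : has_lbound (range q) by exists 0 => _ [n _ <-]; exact: pin_ge0.
have qcvg := nonincreasing_cvgn qmono qlb.
set a := inf (range q) in qcvg.
have pcvg : p n @[n --> \oo] --> a by rewrite -(cvg_shiftn k).
have aq n : (k <= n)%N -> a <= p n.
  move=> kn; have := ge_inf qlb (ex_intro2 _ _ (n - k)%N Logic.I erefl).
  by rewrite /q subnK.
have a01 : 0 <= a <= 1.
  apply/andP; split.
    apply: lb_le_inf; first by exists (q 0%N), 0%N.
    by move=> _ [n _ <-]; exact: pin_ge0.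
  by apply: le_trans (aq k (leqnn k)) _; case/andP: (pk_01 R k hy).
exists a; split => //.
have [phiL [y0 /andP[y00 y01] phy0]] := phi_all k2 a01.
move: phiL phy0; set L := pi_formula k a => phiL phy0.
have k0 : k != 0%N by rewrite -lt0n (ltnW k2).
have L1 : 1 <= L.
  by have := phiL 0; rewrite lexx ler01 expr0n (negbTE k0) mulr0 subr0 addr0 => /(_ isT).
case/andP: a01 => a0 a1.
apply/cvgrPdist_le => eps eps0.
have eps2 : 0 < eps / 2 by rewrite divr_gt0.
have [N0 _ HN0] := (cvgrPdist_le _ _).1 pcvg (eps / 2) eps2.
set M : R := (N0 + k)%:R.
have M1 : 1 <= M by rewrite /M ler1n addn_gt0 (ltnW k2) orbT.
set N := maxn k (Num.trunc (2 * M / eps)).+1.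
exists N => // n /= Nn.
have kn : (k <= n)%N by apply: leq_trans Nn; rewrite leq_maxl.
have n0 : (0 < n)%N by apply: leq_trans kn; rewrite lt0n.
have nR : (0 : R) < n%:R by rewrite ltr0n.
have nbig : M / n%:R <= eps / 2.
  have h := truncnS_gt (2 * M / eps).
  have h2 : ((Num.trunc (2 * M / eps)).+1%:R : R) <= n%:R.
    by rewrite ler_nat; apply: leq_trans Nn; rewrite leq_maxr.
  have h3 : 2 * M / eps * eps = 2 * M by rewrite divfK ?gt_eqF.
  have h5 : 0 < n%:R - 2 * M / eps by rewrite subr_gt0 (lt_le_trans h h2).
  have h4 := mulr_gt0 h5 eps0.
  rewrite ler_pdivrMr //.
  move: h3 h4; generalize (2 * M / eps) => t h3 h4; nra.
have Mn0 : 0 <= M / n%:R by rewrite divr_ge0 // ler0n.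
rewrite ler_norml; apply/andP; split.
  apply: arith_U.
  apply: pin_le; last by apply: addr_ge0 (ltW eps0); apply: le_trans ler01 L1.
  move=> G fG; have [s sn hG] := UB R hy kn fG; apply: le_trans hG _.
  have [c0 c1 c3 c2] := bin_bounds R sn kn n0.
  have /andP[p0 p1] := pk_01 R s hy.
  move: c0 c1 c3 c2 p0 p1.
  set c := (('C(s, k))%:R / ('C(n, k))%:R : R).
  set ps := pin R (kedges E k) s => c0 c1 c3 c2 p0 p1.
  have cp : 0 <= c * (1 - ps) by rewrite mulr_ge0 // subr_ge0.
  have sM1 : (s <= N0 + k)%N -> s%:R / n%:R <= M / n%:R.
    by move=> h; rewrite ler_pM2r ?invr_gt0 // ler_nat.
  have small : (s <= N0 + k)%N -> 1 + s%:R / n%:R - c * (1 - ps) <= L + eps.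
    by move=> h; apply: (arith_small (Mn := M / n%:R)) => //; exact: sM1 h.

  case: (ltnP s N0) => sN0.
    by apply: small; apply: leq_trans (ltnW sN0) (leq_addr _ _).
  case: (ltnP s k) => sk.
    by apply: small; apply: leq_trans (ltnW sk) (leq_addl _ _).
  have hp : ps - a <= eps / 2.
    exact: (arith_abs (HN0 s sN0)).1.
  apply: (arith_up (y := ((s - k)%N)%:R / n%:R) (yk := k%:R / n%:R)
    (Mn := M / n%:R) (Y := (((s - k)%N)%:R / n%:R) ^+ k) (a := a) (L := L)) => //.
  - by rewrite -mulrDl -natrD subnK.
  - by rewrite ler_pM2r ?invr_gt0 // ler_nat leq_addl.
  - exact: c2.
  - by rewrite subr_ge0.
  - apply: phiL; rewrite divr_ge0 ?ler0n //= ler_pdivrMr // mul1r ler_nat.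
    by apply: leq_trans sn; rewrite leq_subr.
apply: arith_Lo.
set s := Num.trunc (y0 * n%:R).
have yn0 : 0 <= y0 * n%:R by rewrite mulr_ge0 // ler0n.
have sle : s%:R <= y0 * n%:R by rewrite truncn_le.
have sgt : y0 * n%:R < s.+1%:R := truncnS_gt _.
have sn : (s <= n)%N.
  rewrite -(ler_nat R); apply: le_trans sle _.
  by rewrite -[X in _ <= X]mul1r ler_wpM2r // ler0n.
have [G [fG hG]] := LB R hy kn sn.
apply: le_trans (pin_ub R fG); rewrite hG.
have [c0 c1 c3 c2] := bin_bounds R sn kn n0.
have x0 : (0 : R) <= s%:R / n%:R by rewrite divr_ge0 // ler0n.
have xy : s%:R / n%:R <= y0 by rewrite ler_pdivrMr.
have a1' : 0 <= 1 - a by rewrite subr_ge0.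
have key : ('C(s, k))%:R / ('C(n, k))%:R * (1 - pin R (kedges E k) s) <=
    (s%:R / n%:R) ^+ k * (1 - a).
  case: (ltnP s k) => sk.
    by rewrite bin_small // mulr0n mul0r mul0r mulr_ge0 // exprn_ge0.
  have hp : 1 - pin R (kedges E k) s <= 1 - a by apply: lerB => //; exact: aq.
  apply: le_trans (ler_wpM2l c0 hp) _.
  by rewrite ler_wpM2r.
have XY : (s%:R / n%:R) ^+ k <= y0 ^+ k.
  by apply: lerXn2r => //; rewrite nnegrE.
apply: (arith_low (ni := n%:R^-1) (Mn := M / n%:R) (X := (s%:R / n%:R) ^+ k)
  (Y0 := y0 ^+ k) (y0 := y0) (L := L) (a := a)) => //.
  have h : y0 < s.+1%:R / n%:R by rewrite ltr_pdivlMr.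
  by rewrite -natr1 mulrDl mul1r in h.
by rewrite -[X in X <= _]mul1r ler_wpM2r // invr_ge0 ler0n.
Qed.
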